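(* Let $\Theta$ be a saturated branch of a tableau of $\mathbf{TAB}_{\mathbf{IB}}$ and let $i$ be a quasi-urfather on $\Theta$. If $i\prec_\Theta j$, then $j\in\mathrm{dom}(v_\Theta)$.
   Context: Hybrid language: fix disjoint countably infinite sets $\mathbf{Prop}$ (propositional variables) and $\mathbf{Nom}$ (nominals). Formulas: $\varphi ::= p \mid i \mid \neg\varphi \mid \varphi\land\varphi \mid \Diamond\varphi \mid @_i\varphi$ with $p\in\mathbf{Prop}$, $i\in\mathbf{Nom}$; $\Box\varphi$ abbreviates $\neg\Diamond\neg\varphi$. Tableau calculus $\mathbf{TAB}_{\mathbf{IB}}$. A tableau is a well-founded tree whose nodes are formulas of the form $@_i\varphi$; its root is a formula $@_i\varphi$ (the root formula) where $i$ does not occur in $\varphi$. A branch is a maximal path; $\varphi\in\Theta$ means $\varphi$ occurs on branch $\Theta$. Each branch is extended by applying the rules below to its formulas as often as possible, except that no further formula is added to a branch once either (i) every new formula generated by applying any rule already occurs on the branch, or (ii) the branch is closed, i.e. contains $@_i\varphi$ and $@_i\neg\varphi$ for some formula $\varphi$ and nominal $i$. A branch is saturated if every new formula generated by applying some rule already occurs on it. An accessibility formula is a formula $@_i\Diamond j$ added by rule $[\Diamond]$ (with $j$ the new nominal). Rules (premises already on the branch; conclusions added to it): [$\neg\neg$] from $@_i\neg\neg\varphi$ add $@_i\varphi$; [$\land$] from $@_i(\varphi\land\psi)$ add $@_i\varphi$ and $@_i\psi$; [$\neg\land$] from $@_i\neg(\varphi\land\psi)$ split the branch into one extended by $@_i\neg\varphi$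 and one extended by $@_i\neg\psi$; [$\Diamond$] from $@_i\Diamond\varphi$, which is not an accessibility formula, add $@_i\Diamond j$ and $@_j\varphi$ where $j$ is a nominal not occurring on the branch; this rule is applied at most once per formula, and only if $i$ is a quasi-urfather on the branch (defined below); [$\neg\Diamond$] from $@_i\neg\Diamond\varphi$ and $@_i\Diamond j$ add $@_j\neg\varphi$; [$\Box_{sym}$] from $@_i\Box\varphi$ and $@_j\Diamond i$ add $@_j\varphi$; [$@$] from $@_i@_j\varphi$ add $@_j\varphi$; [$\neg@$] from $@_i\neg@_j\varphi$ add $@_j\neg\varphi$; [$Id$] from $@_i\varphi$, which is not an accessibility formula, and $@_i j$ add $@_j\varphi$; [$Ref$] for any nominal $i$ occurring on the branch add $@_i i$; ($\mathcal{I}$) for any nominal $i$ occurring on the branch add $@_i\neg\Diamond i$. Auxiliary notions for a branch $\Theta$. $@_i\varphi$ is a quasi-subformula of $@_j\psi$ if $\varphi$ is a subformula of $\psi$, or $\varphi=\neg\chi$ with $\chi$ a subformula of $\psi$. For a nominal $i$ occurring in $\Theta$, $T^\Theta(i)=\{\varphi \mid @_i\varphi\in\Theta$ and $@_i\varphi$ is a quasi-subformula of the root formula$\}$. Nominals $i,j$ are twins if $T^\Theta(i)=T^\Theta(j)$. $i\prec_\Theta j$ if $j$ was introduced by applying $[\Diamond]$ to a formula $@_i\Diamond\varphi$ (equivalently, the accessibility formula $@_i\Diamond j$ is in $\Theta$); $\prec_\Theta^*$ is its reflexive transitive closure. A nominal $i$ is a quasi-urfather on $\Theta$ if there are no twins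 $j\neq k$ with $j\prec_\Theta^* i$ and $k\prec_\Theta^* i$. The identity urfather $v_\Theta(i)$ of a nominal $i$ occurring in $\Theta$ is the earliest introduced nominal $j$ on $\Theta$ such that $j$ is a twin of $i$ and $j$ is a quasi-urfather; it may fail to exist, and $\mathrm{dom}(v_\Theta)$ denotes the set of nominals $i$ for which it exists. *)

(* Defs.v *)
From Stdlib Require Import List Arith Relations.
Import ListNotations.

Inductive form : Type :=
  | PVar : nat -> form
  | Nom  : nat -> form
  | Neg  : form -> form
  | And  : form -> form -> form
  | Dia  : form -> form
  | At   : nat -> form -> form.

Definition Box (f : form) : form := Neg (Dia (Neg f)).

Fixpoint noms (f : form) : list nat :=
  match f with
  | PVar _ => []
  | Nom i => [i]
  | Neg g => noms g
  | And g h => noms g ++ noms h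
  | Dia g => noms g
  | At i g => i :: noms g
  end.

Inductive subf : form -> form -> Prop :=
  | subf_refl f : subf f f
  | subf_neg f g : subf f g -> subf f (Neg g)
  | subf_andl f g h : subf f g -> subf f (And g h)
  | subf_andr f g h : subf f h -> subf f (And g h)
  | subf_dia f g : subf f g -> subf f (Dia g)
  | subf_at f i g : subf f g -> subf f (At i g).

(* A node of a branch: the formula @_i phi, written (i, phi, tag).
   tag = Some chi  iff this node is an accessibility formula @_i <> j
   added by rule [<>] applied to the premise @_i <> chi;
   tag = None otherwise. *)
Definition entry : Type := (nat * form * option form)%type.

Definition on (Th : list entry) (i : nat) (f : form) : Prop :=
  exists t, In (i, f, t) Th.

Definition on_nonacc (Th : list entry) (i : nat) (f : form) : Prop :=
  In (i, f, None) Th.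

Definition entry_has_nom (n : nat) (e : entry) : bool :=
  match e with (i, f, _) => Nat.eqb n i || existsb (Nat.eqb n) (noms f) end.

Definition occurs (Th : list entry) (n : nat) : Prop :=
  exists e, In e Th /\ entry_has_nom n e = true.

(* position (in order of addition) of the first node of Theta in which n occurs;
   nominals are "introduced" in this order *)
Fixpoint first_occ (n : nat) (Th : list entry) : nat :=
  match Th with
  | [] => 0
  | e :: t => if entry_has_nom n e then 0 else S (first_occ n t)
  end.

Definition closed (Th : list entry) : Prop :=
  exists i f, on Th i f /\ on Th i (Neg f).

Definition prec (Th : list entry) (i j : nat) : Prop :=
  exists chi, In (i, Dia (Nom j), Some chi) Th.

Definition prec_star (Th : list entry) : nat -> nat -> Prop :=
  clos_refl_trans nat (prec Th).

Definition quasi_sub (psi f : form) : Prop :=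
  subf f psi \/ exists chi, f = Neg chi /\ subf chi psi.

Definition Tset (psi : form) (Th : list entry) (i : nat) (f : form) : Prop :=
  on Th i f /\ quasi_sub psi f.

Definition twins (psi : form) (Th : list entry) (j k : nat) : Prop :=
  occurs Th j /\ occurs Th k /\ (forall f, Tset psi Th j f <-> Tset psi Th k f).

Definition quasi_urfather (psi : form) (Th : list entry) (i : nat) : Prop :=
  ~ (exists j k, j <> k /\ twins psi Th j k /\ prec_star Th j i /\ prec_star Th k i).

Definition identity_urfather (psi : form) (Th : list entry) (i j : nat) : Prop :=
  twins psi Th i j /\ quasi_urfather psi Th j /\
  (forall k, twins psi Th i k -> quasi_urfather psi Th k ->
     first_occ j Th <= first_occ k Th).

Definition in_dom_v (psi : form) (Th : list entry) (i : nat) : Prop :=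
  exists j, identity_urfather psi Th i j.

(* rule_app psi Th alts : some rule of TAB_IB is applicable to the branch Th
   (root formula @_r psi) and yields the alternatives alts (one list of new
   nodes per resulting branch; only [~/\] has two alternatives). *)
Inductive rule_app (psi : form) (Th : list entry) : list (list entry) -> Prop :=
  | R_negneg i f : on Th i (Neg (Neg f)) ->
      rule_app psi Th [[(i, f, None)]]
  | R_and i f g : on Th i (And f g) ->
      rule_app psi Th [[(i, f, None); (i, g, None)]]
  | R_negand i f g : on Th i (Neg (And f g)) ->
      rule_app psi Th [[(i, Neg f, None)]; [(i, Neg g, None)]]
  | R_dia i f j : on_nonacc Th i (Dia f) ->
      quasi_urfather psi Th i ->
      ~ occurs Th j ->
      ~ (exists k, In (i, Dia (Nom k), Some f) Th) ->
      rule_app psi Th [[(i, Dia (Nom j), Some f); (j, f, None)]]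
  | R_negdia i f j : on Th i (Neg (Dia f)) -> on Th i (Dia (Nom j)) ->
      rule_app psi Th [[(j, Neg f, None)]]
  | R_boxsym i f j : on Th i (Box f) -> on Th j (Dia (Nom i)) ->
      rule_app psi Th [[(j, f, None)]]
  | R_at i j f : on Th i (At j f) ->
      rule_app psi Th [[(j, f, None)]]
  | R_negat i j f : on Th i (Neg (At j f)) ->
      rule_app psi Th [[(j, Neg f, None)]]
  | R_id i j f : on_nonacc Th i f -> on Th i (Nom j) ->
      rule_app psi Th [[(j, f, None)]]
  | R_ref i : occurs Th i ->
      rule_app psi Th [[(i, Nom i, None)]]
  | R_irr i : occurs Th i ->
      rule_app psi Th [[(i, Neg (Dia (Nom i)), None)]].

(* saturated: every new formula generated by applying some rule already occurs
   on the branch (for the branching rule: the formulas of one of the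
   alternatives; an applicable [<>] always generates a new nominal, so
   saturation requires [<>] to be no longer applicable). *)
Definition saturated (psi : form) (Th : list entry) : Prop :=
  forall alts, rule_app psi Th alts ->
    exists B, In B alts /\ forall i f t, In (i, f, t) B -> on Th i f.

(* bs is the sequence of blocks of nodes along a branch of a tableau with root
   formula @_r psi: the first block is the root, every later block is the
   conclusion (one alternative) of a rule applied to the part of the branch
   built so far, and no rule is applied to a closed or saturated branch. *)
Definition tableau_branch_blocks (r : nat) (psi : form) (bs : list (list entry)) : Prop :=
  ~ In r (noms psi) /\
  nth 0 bs [] = [(r, psi, None)] /\
  1 <= length bs /\
  forall k, 1 <= k < length bs ->
    let pre := concat (firstn k bs) in
    ~ closed pre /\ ~ saturated psi pre /\
    exists alts, rule_app psi pre alts /\ In (nth k bs []) alts.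

Definition tableau_branch (r : nat) (psi : form) (Th : list entry) : Prop :=
  exists bs, tableau_branch_blocks r psi bs /\ Th = concat bs.

(* Main.v *)
Require Import Defs.
From Stdlib Require Import List Arith Relations Classical Lia Bool.
Import ListNotations.

Lemma block_fact psi pre alts B p j c :
  rule_app psi pre alts -> In B alts -> In (p, Dia (Nom j), Some c) B ->
  ~ occurs pre j /\ forall q c', In (q, Dia (Nom j), Some c') B -> q = p.
Proof.
  intros R HB HI.
  destruct R; simpl in HB;
    repeat (destruct HB as [HB|HB]; [subst B|]); try contradiction;
    simpl in HI; repeat (destruct HI as [HI|HI]; [try discriminate|]); try contradiction.
  injection HI; intros; subst. split.
  - assumption.
  - intros q c' H'. simpl in H'. destruct H' as [H'|[H'|[]]]; congruence.
Qed.

Definition uniqP (L : list entry) : Prop :=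
  forall p p' j c c', In (p, Dia (Nom j), Some c) L -> In (p', Dia (Nom j), Some c') L -> p = p'.

Lemma firstn_S_nth {A} (l : list A) n d : n < length l ->
  firstn (S n) l = firstn n l ++ [nth n l d].
Proof.
  revert n; induction l as [|a l IH]; intros n H; simpl in *. lia.
  destruct n; simpl. reflexivity. rewrite <- IH by lia. reflexivity.
Qed.

Lemma uniq_prefix r psi bs : tableau_branch_blocks r psi bs ->
  forall n, n <= length bs -> uniqP (concat (firstn n bs)).
Proof.
  intros [Hr [H0 [H1 Hk]]] n. induction n as [|n IH]; intros Hn.
  - intros p p' j c c' A. simpl in A. contradiction.
  - rewrite (firstn_S_nth bs n []) by lia. rewrite concat_app. simpl. rewrite app_nil_r.
    specialize (IH ltac:(lia)).
    destruct n as [|n].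
    + rewrite H0. simpl. intros p p' j c c' A. destruct A as [A|[]]; discriminate.
    + destruct (Hk (S n) ltac:(lia)) as [_ [_ [alts [R Hin]]]].
      set (pre := concat (firstn (S n) bs)) in *.
      intros p p' j c c' A A'.
      apply in_app_or in A; apply in_app_or in A'.
      destruct A as [A|A]; destruct A' as [A'|A'].
      * eapply IH; eauto.
      * destruct (block_fact _ _ _ _ _ _ _ R Hin A') as [NO _].
        exfalso; apply NO. exists (p, Dia (Nom j), Some c). split; [exact A|].
        simpl. rewrite Nat.eqb_refl. apply orb_true_r.
      * destruct (block_fact _ _ _ _ _ _ _ R Hin A) as [NO _].
        exfalso; apply NO. exists (p', Dia (Nom j), Some c'). split; [exact A'|].
        simpl. rewrite Nat.eqb_refl. apply orb_true_r.
      * destruct (block_fact _ _ _ _ _ _ _ R Hin A) as [_ U].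
        symmetry. eapply U; eauto.
Qed.

Lemma uniq_branch r psi Th : tableau_branch r psi Th -> uniqP Th.
Proof.
  intros [bs [Hb ->]]. rewrite <- (firstn_all bs).
  eapply uniq_prefix; eauto.
Qed.

Lemma twins_sym psi Th a b : twins psi Th a b -> twins psi Th b a.
Proof. intros [A [B C]]. split; [|split]; auto. intros f; split; apply C. Qed.

Lemma prec_star_trans Th a b c : prec_star Th a b -> prec_star Th b c -> prec_star Th a c.
Proof. intros; eapply rt_trans; eauto. Qed.

Lemma min_exists (P : nat -> Prop) (g : nat -> nat) k :
  P k -> exists m, P m /\ forall k', P k' -> g m <= g k'.
Proof.
  remember (g k) as n eqn:E. revert k E.
  induction n as [n IH] using (well_founded_induction lt_wf).
  intros k E Pk.
  destruct (classic (exists k', P k' /\ g k' < g k)) as [[k' [Pk' Lt]]|NE].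
  - eapply (IH (g k')); eauto. lia.
  - exists k. split; auto. intros k' Pk'.
    destruct (le_lt_dec (g k) (g k')); auto. exfalso; apply NE; eauto.
Qed.

Theorem lemma6 (r : nat) (psi : form) (Th : list entry) (i j : nat) :
  tableau_branch r psi Th ->
  saturated psi Th ->
  quasi_urfather psi Th i ->
  prec Th i j ->
  in_dom_v psi Th j.
Proof.
  intros TB _ QU [chi Hij].
  pose proof (uniq_branch _ _ _ TB) as U.
  assert (Hocc : occurs Th j).
  { exists (i, Dia (Nom j), Some chi). split; auto. simpl.
    rewrite Nat.eqb_refl. apply orb_true_r. }
  assert (Anc : forall a, prec_star Th a j -> a = j \/ prec_star Th a i).
  { intros a H. apply clos_rt_rtn1 in H. inversion H as [|p q Hp Hr]; subst.
    - left; reflexivity.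
    - right. destruct Hp as [c Hc].
      assert (p = i) by (eapply U; eauto). subst.
      apply clos_rtn1_rt; assumption. }
  assert (Cand : exists k, twins psi Th j k /\ quasi_urfather psi Th k).
  { destruct (classic (quasi_urfather psi Th j)) as [Q|NQ].
    - exists j. split; auto. split; [|split]; auto. tauto.
    - unfold quasi_urfather in NQ. apply NNPP in NQ.
      destruct NQ as [a [b [Neq [Tw [Ha Hb]]]]].
      destruct (Anc a Ha) as [->|Ha']; destruct (Anc b Hb) as [->|Hb'].
      + congruence.
      + exists b. split; auto.
        intros [x [y [Nxy [Txy [Hx Hy]]]]]. apply QU.
        exists x, y. split; [auto|split; [auto|split; eapply prec_star_trans; eauto]].
      + exists a. split; [apply twins_sym; auto|].
        intros [x [y [Nxy [Txy [Hx Hy]]]]]. apply QU.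
        exists x, y. split; [auto|split; [auto|split; eapply prec_star_trans; eauto]].
      + exfalso; apply QU. exists a, b; auto. }
  destruct Cand as [k Pk].
  destruct (min_exists (fun k => twins psi Th j k /\ quasi_urfather psi Th k)
              (fun k => first_occ k Th) k Pk) as [m [[T1 T2] Mn]].
  exists m. split; [|split]; auto.
Qed.
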